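(* Let $B$ be a Boolean algebra that is not complete. Then there exist a CFG-space $X$ over $B$ (one may take $X=\{(x,y)\in B^2: x\wedge y=0\}$ with $d((x,y),(x',y'))=(x\triangle x')\vee(y\triangle y')$), subsets $U,V\subset X$, and an isometry $f:U\to V$ such that there is no contractive map $F:X\to X$ whose restriction to $U$ is $f$.
   Context: A Boolean metric space over $B$ is a set with symmetric $d$ into $B$, $d(x,y)=0$ iff $x=y$, $d(x,z)\le d(x,y)\vee d(y,z)$. Contractive: $d(f(x),f(y))\le d(x,y)$; isometry: bijection preserving $d$. A partition of $B$ is a finite family of pairwise disjoint elements with supremum $1$; $x$ is a convex combination of $x_0,\dots,x_n$ with coefficients a partition $a_0,\dots,a_n$ if $a_i\wedge d(x,x_i)=0$ for all $i$. A CFG-space is a Boolean metric space that is convex (every such convex combination of its points exists in it) and finitely generated (some finite subset $S$ has every point as a convex combination of points of $S$). $B$ is complete if every subset has a supremum; $\triangle$ is symmetric difference. *)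

(* Defs.v *)
(* A Boolean algebra is a complemented distributive lattice
   with top and bottom: [ctbDistrLatticeType disp]. *)
From HB Require Import structures.
From mathcomp Require Import all_boot all_order.
Set Implicit Arguments. Unset Strict Implicit. Unset Printing Implicit Defensive.
Import Order.Theory.
Local Open Scope order_scope.

Section BoolMetric.
Context {disp : Order.disp_t} (B : ctbDistrLatticeType disp).

Definition symdiff (x y : B) : B := (x `\` y) `|` (y `\` x).

Definition bool_metric (X : Type) (d : X -> X -> B) : Prop :=
  (forall x y, d x y = d y x) /\
  (forall x y, d x y = \bot <-> x = y) /\
  (forall x y z, d x z <= d x y `|` d y z).

Definition is_partition (n : nat) (a : 'I_n.+1 -> B) : Prop :=
  (forall i j, i <> j -> a i `&` a j = \bot) /\
  \join_(i < n.+1) a i = \top.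

Definition convex_comb (X : Type) (d : X -> X -> B) (x : X)
  (n : nat) (a : 'I_n.+1 -> B) (xs : 'I_n.+1 -> X) : Prop :=
  forall i, a i `&` d x (xs i) = \bot.

Definition convex_space (X : Type) (d : X -> X -> B) : Prop :=
  forall (n : nat) (a : 'I_n.+1 -> B) (xs : 'I_n.+1 -> X),
    is_partition a -> exists x : X, convex_comb d x a xs.

Definition finitely_generated (X : Type) (d : X -> X -> B) : Prop :=
  exists (m : nat) (g : 'I_m -> X),
    forall x : X, exists (n : nat) (a : 'I_n.+1 -> B) (h : 'I_n.+1 -> 'I_m),
      is_partition a /\ convex_comb d x a (fun i => g (h i)).

Definition CFG_space (X : Type) (d : X -> X -> B) : Prop :=
  bool_metric d /\ convex_space d /\ finitely_generated d.

Definition contractive (X : Type) (d : X -> X -> B) (F : X -> X) : Prop :=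
  forall x y, d (F x) (F y) <= d x y.

Definition isometry_on (X : Type) (d : X -> X -> B) (U V : X -> Prop)
  (f : X -> X) : Prop :=
  (forall u, U u -> V (f u)) /\
  (forall u u', U u -> U u' -> f u = f u' -> u = u') /\
  (forall v, V v -> exists u, U u /\ f u = v) /\
  (forall u u', U u -> U u' -> d (f u) (f u') = d u u').

Definition complete_BA : Prop :=
  forall P : B -> Prop, exists s : B,
    (forall b, P b -> b <= s) /\ (forall t, (forall b, P b -> b <= t) -> s <= t).

End BoolMetric.

(* Main.v *)
Require Import Defs.
From HB Require Import structures.
From mathcomp Require Import all_boot all_order.
From Stdlib Require Import Classical ClassicalEpsilon.
Set Implicit Arguments. Unset Strict Implicit.
Import Order.Theory.
Local Open Scope order_scope.

Section L.
Context {disp : Order.disp_t} (B : ctbDistrLatticeType disp).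
Implicit Types x y z a c : B.

Lemma leE x c : (x <= c) = (x `&` ~` c == \bot).
Proof. by rewrite -diffE diff_eq0. Qed.

Lemma agreeE a x y : (a `&` symdiff x y == \bot) = (a `&` x == a `&` y).
Proof.
rewrite /symdiff meetUr join_eq0 !meetxB !diff_eq0.
rewrite eq_le; congr andb.
  by rewrite lexI leIl.
by rewrite lexI leIl.
Qed.

Definition dd (p q : B * B) : B := symdiff p.1 q.1 `|` symdiff p.2 q.2.

Lemma agree2 a p q : (a `&` dd p q == \bot) = (a `&` p.1 == a `&` q.1) && (a `&` p.2 == a `&` q.2).
Proof. by rewrite /dd meetUr join_eq0 !agreeE. Qed.

Lemma symdiffC x y : symdiff x y = symdiff y x.
Proof. by rewrite /symdiff joinC. Qed.

Lemma ddC p q : dd p q = dd q p.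
Proof. by rewrite /dd symdiffC (symdiffC p.2). Qed.

Lemma dd0 p q : dd p q = \bot <-> p = q.
Proof.
split; last by move=> ->; rewrite /dd /symdiff !diffxx !joinxx.
move=> /eqP; rewrite -(meet1x (dd p q)) agree2 !meet1x => /andP[/eqP h1 /eqP h2].
by case: p q h1 h2 => ? ? [? ?] /= -> ->.
Qed.

Lemma ddtri p q r : dd p r <= dd p q `|` dd q r.
Proof.
set c := _ `|` _.
have h1 : ~` c `&` dd p q == \bot by rewrite meetC -leE /c lexUl.
have h2 : ~` c `&` dd q r == \bot by rewrite meetC -leE /c lexUr.
rewrite leE meetC agree2.
move: h1 h2; rewrite !agree2 => /andP[/eqP -> /eqP ->] /andP[/eqP -> /eqP ->].
by rewrite !eqxx.
Qed.

Lemma part_meet n (a : 'I_n.+1 -> B) (y : 'I_n.+1 -> B) j :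
  (forall i j, i <> j -> a i `&` a j = \bot) ->
  a j `&` \join_(i < n.+1) (a i `&` y i) = a j `&` y j.
Proof.
move=> Hd; apply/eqP; rewrite eq_le; apply/andP; split; last first.
  by rewrite lexI leIl (joins_min (j := j)) // leIr.
rewrite (big_morph (Order.meet (a j)) (meetUr (a j)) (meetx0 (a j))).
apply: joins_le => i _; rewrite lexI.
case: (eqVneq i j) => [->|ne].
  by rewrite leIl /= meetA meetxx leIr.
rewrite leIl /= meetA Hd ?meet0x ?le0x //.
by move=> E; rewrite E eqxx in ne.
Qed.

Lemma dd_convex : convex_space dd.
Proof.
move=> n a xs [Hd Hj].
exists (\join_(i < n.+1) (a i `&` (xs i).1), \join_(i < n.+1) (a i `&` (xs i).2)).
move=> j; apply/eqP; rewrite agree2 /=.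
by rewrite !part_meet // !eqxx.
Qed.

Definition lit (b : bool) x := if b then x else ~` x.
Definition genb (b : bool) : B := if b then \top else \bot.

Lemma lit_agree a b x : a <= lit b x -> a `&` x = a `&` genb b.
Proof.
case: b => /= h; first by rewrite meetx1; apply/meet_idPl.
by rewrite meetx0; apply/eqP; move: h; rewrite leE complK.
Qed.

Lemma lit_disj b b' x : b != b' -> lit b x `&` lit b' x = \bot.
Proof. by case: b; case: b' => //= _; rewrite ?meetxC ?meetCx. Qed.

Definition b1 (i : 'I_4) := odd i.
Definition b2 (i : 'I_4) := (1 < i)%N.

Lemma bits_inj (i j : 'I_4) : b1 i = b1 j -> b2 i = b2 j -> i = j.
Proof.
rewrite /b1 /b2; case: i j => [[|[|[|[|?]]]] Hi] [[|[|[|[|?]]]] Hj] //= _ _;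
  by apply: val_inj.
Qed.

Lemma dd_fg : finitely_generated dd.
Proof.
exists 4, (fun i => (genb (b1 i), genb (b2 i))).
move=> [x y]; exists 3, (fun i => lit (b1 i) x `&` lit (b2 i) y), id.
split; first split.
- move=> i j ne.
  have : (b1 i != b1 j) || (b2 i != b2 j).
    case: (eqVneq (b1 i) (b1 j)) => [h1|//]; case: (eqVneq (b2 i) (b2 j)) => [h2|//].
    by case: ne; apply: bits_inj.
  case/orP => h.
    by rewrite meetACA lit_disj // meet0x.
  by rewrite meetACA (lit_disj _ h) meetx0.
- rewrite !big_ord_recl big_ord0 /= /b1 /b2 /=.
  by rewrite joinx0 joinA -!meetUl !joinCx !meet1x joinCx.
- move=> i; apply/eqP; rewrite agree2 /=.
  by rewrite (lit_agree (leIl _ _)) (lit_agree (leIr _ _)) !eqxx.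
Qed.

Lemma agree_le p q c : dd p q <= ~` c -> c `&` p.1 = c `&` q.1.
Proof. by rewrite leE complK meetC agree2 => /andP[/eqP -> _]. Qed.

Lemma sdC x y : symdiff (~` x) (~` y) = symdiff x y.
Proof. rewrite /symdiff !diffE !complK joinC; congr (_ `|` _); apply: meetC. Qed.

Lemma sd0x x : symdiff \bot x = x.
Proof. by rewrite /symdiff diff0x diffx0 join0x. Qed.

Lemma dd_zz b b' : dd (b, ~` b) (b', ~` b') = dd (\bot, ~` b) (\bot, ~` b').
Proof. by rewrite /dd /= sd0x sdC joinxx join0x. Qed.

Lemma dd_vz a b : a `&` b = \bot -> dd (\bot, ~` a) (b, ~` b) = dd (\bot, ~` a) (\bot, ~` b).
Proof.
move=> h; rewrite /dd /= !sd0x sdC join0x /symdiff (disj_diffr (introT eqP h)).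
by rewrite joinCA joinxx.
Qed.

End L.

Theorem mainTheorem13 (disp : Order.disp_t) (B : ctbDistrLatticeType disp) :
  ~ complete_BA B ->
  exists (X : Type) (d : X -> X -> B),
    CFG_space d /\
    exists (U V : X -> Prop) (f : X -> X),
      isometry_on d U V f /\
      ~ (exists F : X -> X, contractive d F /\ forall u, U u -> F u = f u).
Proof.
move=> nc.
have [P0 HP] : exists P0 : B -> Prop, forall s, ~ ((forall b, P0 b -> b <= s) /\
    (forall t, (forall b, P0 b -> b <= t) -> s <= t)).
  apply: NNPP => H; apply: nc => P; apply: NNPP => H2; apply: H; exists P => s Hs.
  by apply: H2; exists s.
pose Q := fun b : B => forall a, P0 a -> a `&` b = \bot.
pose U := fun p : B * B => (exists a, P0 a /\ p = (\bot, ~` a)) \/ (exists b, Q b /\ p = (\bot, ~` b)).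
pose f := fun p : B * B => if excluded_middle_informative (exists b, Q b /\ p = (\bot, ~` b))
  then (~` p.2, p.2) else p.
have fz b : Q b -> f (\bot, ~` b) = (b, ~` b).
  move=> Qb; rewrite /f; destruct (excluded_middle_informative _) as [H|nE]; last by case: nE; exists b.
  by rewrite /= complK.
have fv a : P0 a -> f (\bot, ~` a) = (\bot, ~` a).
  move=> Pa; rewrite /f; destruct (excluded_middle_informative _) as [H|] => //=.
  case: H => b [Qb E].
  case: E => /compl_inj E; subst b.
  have a0 : a = \bot by rewrite -(Qb a Pa) meetxx.
  by rewrite a0 compl0 compl1.
have iso u u' : U u -> U u' -> dd (f u) (f u') = dd u u'.
  have key a b : P0 a -> Q b -> dd (f (\bot, ~` a)) (f (\bot, ~` b)) = dd (\bot, ~` a) (\bot, ~` b).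
    by move=> Pa Qb; rewrite fv // fz // dd_vz // Qb.
  case=> [[a [Pa ->]]|[b [Qb ->]]] [[a' [Pa' ->]]|[b' [Qb' ->]]].
  - by rewrite !fv.
  - exact: key.
  - by rewrite ddC (ddC (\bot, _)); apply: key.
  - by rewrite !fz // dd_zz.
exists (B * B)%type, (@dd _ B); split.
  split; last split; [split; [exact: ddC|split; [exact: dd0|exact: ddtri]]|exact: dd_convex|exact: dd_fg].
exists U, (fun v => exists u, U u /\ f u = v), f; split.
  split; first by move=> u Uu; exists u.
  split; first by move=> u u' Uu Uu' E; apply/dd0; rewrite -iso // E; apply/dd0.
  by split=> // v [u [Uu <-]]; exists u.
have dd00 (c : B) : dd (\bot, \bot) (\bot, ~` c) = ~` c.
  by rewrite /dd /= !sd0x join0x.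
case=> F [cF FU].
set p := (F (\bot, \bot)).1.
have hP a : P0 a -> a `&` p = \bot.
  move=> Pa; have := cF (\bot, \bot) (\bot, ~` a).
  rewrite (FU (\bot, ~` a)); last by left; exists a.
  rewrite fv // (dd00 a) => /agree_le.
  by rewrite /= meetx0.
have hQ b : Q b -> b `&` p = b.
  move=> Qb; have := cF (\bot, \bot) (\bot, ~` b).
  rewrite (FU (\bot, ~` b)); last by right; exists b.
  rewrite fz // (dd00 b) => /agree_le.
  by rewrite /= meetxx.
apply: (HP (~` p)); split.
  by move=> a Pa; rewrite leE complK hP.
move=> t Ht; rewrite leE.
have Qb : Q (~` p `&` ~` t).
  move=> a Pa; rewrite meetCA; move: (Ht a Pa); rewrite leE => /eqP ->.
  by rewrite meetx0.
by rewrite -(hQ _ Qb) -meetA (meetC (~` t)) meetA meetCx meet0x.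
Qed.
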